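(* Let $n$ and $d$ be positive integers and let $\vec{G}$ be a digraph of order $n$ whose minimum outdegree is at least $d$. Then $\vec{G}$ contains a subdivision of the complete digraph of order $\lfloor d^2/(8n^{3/2}) \rfloor$.
   Context: Digraphs have no loops, and for any ordered pair of vertices $x,y$ there is at most one edge directed from $x$ to $y$ (there may also be an edge from $y$ to $x$). The complete digraph of order $\ell$ has $\ell$ vertices and, for every ordered pair $(v,w)$ of distinct vertices, an edge directed from $v$ to $w$. A digraph $\vec{H}$ is a subdivision of a digraph $\vec{F}$ if $\vec{H}$ can be obtained from $\vec{F}$ by replacing each edge $\vec{xy}$ of $\vec{F}$ by a directed path from $x$ to $y$, such that the paths corresponding to distinct edges are internally vertex-disjoint (and their interior vertices are new). ''Contains a subdivision'' means has a subdigraph that is a subdivision. *)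

(* Defs.v *)
From mathcomp Require Import all_boot all_order all_algebra.
From mathcomp Require Import reals.
Set Implicit Arguments. Unset Strict Implicit. Unset Printing Implicit Defensive.

(* A digraph on a finite vertex type V is an edge relation e : rel V;
   e x y means there is an edge directed from x to y.  At most one edge per
   ordered pair is automatic; "no loops" is the predicate [loopless]. *)
Definition loopless (V : finType) (e : rel V) : Prop := forall x, ~~ e x x.

Definition outdeg (V : finType) (e : rel V) (v : V) : nat := #|[set w | e v w]|.

(* A directed path from x to y in e, given by the sequence p of vertices after x
   (so the path is x :: p, its last vertex is y); it has at least one edge and
   no repeated vertex. *)
Definition dipath (V : finType) (e : rel V) (x y : V) (p : seq V) : Prop :=
  [/\ p != [::], path e x p, last x p = y & uniq (x :: p)].

(* interior vertices of the path x :: p : all of p except its last vertex *)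
Definition inner (V : finType) (x : V) (p : seq V) : seq V := behead (belast x p).

Definition contains_subdivision_complete (V : finType) (e : rel V) (l : nat) : Prop :=
  exists (b : 'I_l -> V) (P : 'I_l -> 'I_l -> seq V),
    [/\ injective b,
        (forall i j, i != j -> dipath e (b i) (b j) (P i j)),
        (forall i j k, i != j -> b k \notin inner (b i) (P i j)) &
        (forall i j i' j', i != j -> i' != j' -> (i, j) != (i', j') ->
           forall x, x \in inner (b i) (P i j) -> x \notin inner (b i') (P i' j'))].

(* Main.v *)
Require Import Defs.
From mathcomp Require Import all_boot all_order all_algebra.
From mathcomp Require Import reals.
From mathcomp Require Import zify ring lra.
Import Order.TTheory GRing.Theory Num.Theory.
Set Implicit Arguments. Unset Strict Implicit. Unset Printing Implicit Defensive.

Section G.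
Variables (V : finType) (e : rel V).
Hypothesis loop : forall v, ~~ e v v.

Fixpoint lay (W : {set V}) (y : V) (r : nat) : {set V} :=
  if r is r'.+1 then lay W y r' :|: [set v in W | [exists w in lay W y r', e v w]]
  else [set y].

Lemma layS (W : {set V}) (y : V) r : lay W y r.+1 =
  lay W y r :|: [set v in W | [exists w in lay W y r, e v w]].
Proof. by []. Qed.

Lemma lay_sub (W : {set V}) (y : V) r : y \in W -> lay W y r \subset W.
Proof.
move=> yW; elim: r => [|r IH] /=; first by rewrite sub1set.
by rewrite subUset IH /=; apply/subsetP => v; rewrite inE => /andP[].
Qed.

Lemma lay_mono (W : {set V}) (y : V) r s : r <= s -> lay W y r \subset lay W y s.
Proof.
move=> rs; rewrite -(subnKC rs); elim: (s - r) => [|k IH]; first by rewrite addn0.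
by rewrite addnS /=; apply: subset_trans IH (subsetUl _ _).
Qed.

Lemma lay_path (W : {set V}) (y : V) r v : v \in lay W y r -> exists p,
  [/\ path e v p, last v p = y, uniq (v :: p), {subset v :: p <= lay W y r} & size p <= r].
Proof.
elim: r v => [|r IH] v /=.
  rewrite inE => /eqP ->; exists [::]; split => //= z; by rewrite !inE.
case: (boolP (v \in lay W y r)) => vr.
  move=> _; have [p [P1 P2 P3 P4 P5]] := IH v vr; exists p; split => //.
    by move=> z /P4 zr; rewrite inE zr.
  exact: leqW.
rewrite inE (negbTE vr) /= inE => /andP[vW /existsP[w /andP[wr evw]]].
have [q [P1 P2 P3 P4 P5]] := IH w wr.
exists (w :: q); split => //=; first by rewrite evw.
  apply/andP; split; last exact: P3. apply/negP => /P4; by rewrite (negbTE vr).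
 move=> z; rewrite inE => /orP[/eqP ->|/P4 zr]; rewrite inE.
   rewrite (negbTE vr) /= inE vW /=; apply/existsP; exists w; by rewrite wr evw.
 by rewrite zr.
Qed.

Lemma amgm0 (m c : nat) : 256 * m * c ^ 3 <= (m + 3 * c) ^ 4.
Proof.
case: (leqP c m) => h.
  have [t ->] : exists t, m = c + t by exists (m - c); lia.
  have -> : (c + t + 3 * c) ^ 4 = 256 * (c + t) * c ^ 3 + (96 * c ^ 2 * t ^ 2 + 16 * c * t ^ 3 + t ^ 4).
    by rewrite !expnS expn0; ring.
  by rewrite leq_addr.
have [t ->] : exists t, c = m + t by exists (c - m); lia.
have -> : (m + 3 * (m + t)) ^ 4 = 256 * m * (m + t) ^ 3 + (96 * m ^ 2 * t ^ 2 + 176 * m * t ^ 3 + 81 * t ^ 4).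
  by rewrite !expnS expn0; ring.
by rewrite leq_addr.
Qed.

Lemma amgm (m k d c : nat) : 0 < m -> k ^ 4 * m ^ 3 <= d ^ 4 * c ^ 3 -> 4 * m * k <= d * (m + 3 * c).
Proof.
move=> m0 H; rewrite leqNgt; apply/negP => H2.
have H3 : (d * (m + 3 * c)) ^ 4 < (4 * m * k) ^ 4 by rewrite ltn_exp2r.
have H4 := amgm0 m c.
have H5 : (4 * m * k) ^ 4 = 256 * m * (k ^ 4 * m ^ 3) by rewrite !expnS expn0; ring.
rewrite H5 expnMn in H3.
have A : 256 * m * (k ^ 4 * m ^ 3) <= 256 * m * (d ^ 4 * c ^ 3) by rewrite leq_mul2l H orbT.
have B : d ^ 4 * (256 * m * c ^ 3) <= d ^ 4 * (m + 3 * c) ^ 4 by rewrite leq_mul2l H4 orbT.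
have E : 256 * m * (d ^ 4 * c ^ 3) = d ^ 4 * (256 * m * c ^ 3) by ring.
rewrite E in A.
by move: (leq_trans A B); rewrite leqNgt H3.
Qed.

Definition nbr (T : {set V}) v := [set w in T | e v w].
Definition mdeg (T : {set V}) k := forall v, v \in T -> k <= #|nbr T v|.

Section Grow.
Variables (S : {set V}) (d : nat).
Hypothesis mS : mdeg S d.
Hypothesis ext : forall T j, T != set0 -> mdeg T j -> j ^ 4 * #|S| ^ 3 <= d ^ 4 * #|T| ^ 3.
Variables (U : {set V}) (y : V).
Hypothesis yW : y \in S :\: U.
Local Notation W := (S :\: U).
Local Notation L := (lay W y).

Lemma L_S r : L r \subset S.
Proof. by apply: subset_trans (lay_sub r yW) _; apply: subsetDl. Qed.

Lemma grow r : ~~ (W \subset L r.+1) ->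
  3 * d * #|L r.+1| <= 4 * #|S| * (#|L r.+1| - #|L r| + #|U|).
Proof.
move=> nW.
set C := W :\: L r.+1.
have C0 : C != set0 by rewrite /C setD_eq0.
have Lm : L r \subset L r.+1 by apply: lay_mono.
have lamE : #|L r.+1 :\: L r| = #|L r.+1| - #|L r|.
  by rewrite cardsD (setIidPr Lm).
set lam := #|L r.+1| - #|L r|.
have mC : mdeg C (d - #|U| - lam).
  move=> z zC; move: (zC); rewrite /C in_setD => /andP[zr]; rewrite in_setD => /andP[zU zS].
  have sub : nbr S z \subset (U :|: (L r.+1 :\: L r)) :|: nbr C z.
    apply/subsetP => w; rewrite inE => /andP[wS ezw].
    rewrite in_setU; case: (boolP (w \in U)) => wU; first by rewrite in_setU wU.
    case: (boolP (w \in L r.+1)) => wr.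
      case: (boolP (w \in L r)) => wr'.
        exfalso; move/negP: zr; apply; rewrite layS in_setU; apply/orP; right.
        rewrite inE in_setD zU zS /=; apply/existsP; exists w; by rewrite wr' ezw.
      by rewrite in_setU in_setD wr wr' orbT.
    by apply/orP; right; rewrite /nbr inE /C in_setD wr ezw in_setD wU wS.
  have h1 := subset_leq_card sub.
  have h2 := mS zS.
  have h3 := leq_card_setU (U :|: (L r.+1 :\: L r)) (nbr C z).
  have h4 := leq_card_setU U (L r.+1 :\: L r).
  rewrite lamE in h4; case: h3 => h3 _; case: h4 => h4 _.
  rewrite -/C /lam; lia.
have H := ext C0 mC.
have m0 : 0 < #|S| by apply/card_gt0P; exists y; move: yW; rewrite inE => /andP[].
have H2 := amgm m0 H.
have cC : #|C| + #|L r.+1| <= #|S|.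
  have : C \subset S :\: L r.+1 by rewrite /C; apply: setSD; apply: subsetDl.
  move/subset_leq_card; rewrite cardsD (setIidPr (L_S r.+1)).
  have := subset_leq_card (L_S r.+1); lia.
have Lle : #|L r| <= #|L r.+1| by apply: subset_leq_card.
move: H2 cC Lle; rewrite /lam.
move: #|C| #|L r.+1| #|L r| #|U| #|S| => c a b u m.
case: (leqP d (u + (a - b))) => hd H2 cC Lle.
  have : a <= m by lia.
  nia.
nia.
Qed.

Lemma arith1 (M a b c u X Y r : nat) : b <= c -> X <= Y ->
  3 * Y <= M * (c - b + u) -> M * a + r * (3 * X - M * u) <= M * b ->
  M * a + r.+1 * (3 * X - M * u) <= M * c.
Proof.
move=> bc XY g IH; rewrite mulSn.
have E : M * (c - b + u) = M * c - M * b + M * u by rewrite mulnDr mulnBr.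
have : M * b <= M * c by rewrite leq_mul2l bc orbT.
lia.
Qed.

Lemma iterL r : W \subset L r.+1 \/
  4 * #|S| * #|L 1| + r * (3 * d * #|L 1| - 4 * #|S| * #|U|) <= 4 * #|S| * #|L r.+1|.
Proof.
elim: r => [|r IH]; first by right; rewrite mul0n addn0.
case: (boolP (W \subset L r.+2)) => h; first by left.
right.
have g := grow h.
have h' : ~~ (W \subset L r.+1).
  apply: contra h => h2; apply: subset_trans h2 _; exact: lay_mono.
case: IH => [h2|IH]; first by rewrite h2 in h'.
have a1 : #|L 1| <= #|L r.+2| by apply/subset_leq_card/lay_mono.
have ar : #|L r.+1| <= #|L r.+2| by apply/subset_leq_card/lay_mono.
have : d * #|L 1| <= d * #|L r.+2| by rewrite leq_mul2l a1 orbT.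
move: g IH a1 ar; set a := #|L 1|; set c := #|L r.+2|; move=> g IH a1 ar.
rewrite -[3 * d * a]mulnA in IH *; rewrite -[3 * d * c]mulnA in g.
move=> da; exact: (arith1 ar da g IH).
Qed.

Lemma find_path (x : V) (l P : nat) : x \in W -> x != y ->
  d + 1 <= #|[set v in S | e v y]| + l ->
  (3 * d + 4 * #|S|) * #|U| + 3 * d * l <= d * d ->
  2 * #|S| * #|S| < P * (d * d) ->
  exists p, [/\ path e x p, last x p = y, uniq (x :: p), {subset p <= W} & size p <= P.+1].
Proof.
move=> xW xy hin hU hP.
set In := [set v in S | e v y].
have A1 : #|In| + 1 <= #|L 1| + #|U|.
  have sub : y |: (In :\: U) \subset L 1.
    apply/subsetP => z; rewrite in_setU1 => /orP[/eqP ->|]; first by rewrite layS in_setU; apply/orP; left; rewrite /= in_set1.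
    rewrite in_setD inE => /andP[zU /andP[zS ezy]].
    rewrite layS in_setU; apply/orP; right; rewrite inE in_setD zU zS /=.
    apply/existsP; exists y; by rewrite inE eqxx ezy.
  have := subset_leq_card sub; rewrite cardsU1 in_setD inE (negbTE (loop y)) !andbF /=.
  rewrite cardsD => h.
  have := subset_leq_card (subsetIr In U); have := subset_leq_card (subsetIl In U); lia.
case: (iterL P) => [Wsub|H].
  have xL : x \in L P.+1 by apply: (subsetP Wsub).
  have [p [P1 P2 P3 P4 P5]] := lay_path xL.
  exists p; split => // z zp; apply: (subsetP (lay_sub P.+1 yW)); apply: P4.
  by rewrite inE zp orbT.
have aS : #|L P.+1| <= #|S| := subset_leq_card (L_S P.+1).
exfalso.
move: H aS A1 hin hU hP; move: #|L 1| #|L P.+1| #|U| #|S| #|In| => a1 a u m i.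
move=> H aS A1 hin hU hP.
have k1 : 2 * (d * d) + 4 * m * u <= 3 * d * a1 by nia.
have k2 : P * (2 * (d * d)) <= P * (3 * d * a1 - 4 * m * u).
  by rewrite leq_mul2l; apply/orP; right; lia.
have k3 : 4 * m * a <= 4 * m * m by rewrite leq_mul2l aS orbT.
lia.
Qed.
End Grow.

Lemma inner_sub (x : V) p : {subset inner x p <= p}.
Proof.
case: p => [|a p] //= z zb; have := mem_belast zb; by rewrite inE.
Qed.

Lemma size_inner (x : V) p : size (inner x p) = (size p).-1.
Proof. by rewrite /inner size_behead size_belast. Qed.

Lemma dipath_end (x y : V) p : dipath e x y p -> x \notin inner x p /\ y \notin inner x p.
Proof.
case=> _ _ <- U; split.
  apply/negP => /inner_sub; move: U => /= /andP[/negP h _]; exact: h.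
case: p U => [|a p] //= /andP[_ U].
have U' : uniq (rcons (belast a p) (last a p)) by rewrite -lastI.
by move: U'; rewrite rcons_uniq => /andP[h _].
Qed.

Lemma size_flat (T : eqType) (s : seq (seq T)) (k : nat) : (forall t, t \in s -> size t <= k) ->
  size (flatten s) <= size s * k.
Proof.
elim: s => [|t s IH] //= H; rewrite size_cat mulSn leq_add //.
  by apply: H; rewrite inE eqxx.
by apply: IH => t' ts; apply: H; rewrite inE ts orbT.
Qed.

Section Build.
Variables (S : {set V}) (d : nat).
Hypothesis mS : mdeg S d.
Hypothesis ext : forall T j, T != set0 -> mdeg T j -> j ^ 4 * #|S| ^ 3 <= d ^ 4 * #|T| ^ 3.
Variables (l Pm : nat) (b : 'I_l -> V).
Hypothesis binj : injective b.
Hypothesis bS : forall i, b i \in S.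
Hypothesis bin : forall i, d + 1 <= #|[set v in S | e v (b i)]| + l.
Hypothesis hU : (3 * d + 4 * #|S|) * (l + l * l * Pm) + 3 * d * l <= d * d.
Hypothesis hP : 2 * #|S| * #|S| < Pm * (d * d).

Lemma build (Q : seq ('I_l * 'I_l)) : uniq Q -> (forall q, q \in Q -> q.1 != q.2) ->
  size Q <= l * l ->
  exists P : 'I_l -> 'I_l -> seq V,
   (forall q, q \in Q -> [/\ dipath e (b q.1) (b q.2) (P q.1 q.2),
       size (inner (b q.1) (P q.1 q.2)) <= Pm &
       forall k, b k \notin inner (b q.1) (P q.1 q.2)]) /\
   (forall q q', q \in Q -> q' \in Q -> q != q' ->
       forall x, x \in inner (b q.1) (P q.1 q.2) -> x \notin inner (b q'.1) (P q'.1 q'.2)).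
Proof.
elim: Q => [|[i j] Q IH] /=.
  by move=> _ _ _; exists (fun _ _ => [::]); split.
move=> /andP[nqQ uQ] Hd sQ.
have HdQ : forall q, q \in Q -> q.1 != q.2.
  by move=> q qQ; apply: Hd; rewrite inE qQ orbT.
have [P [P1 P2]] := IH uQ HdQ (ltnW sQ).
have ij : i != j by have := Hd (i, j) (mem_head _ _).
set U := (b @: [set k | (k != i) && (k != j)]) :|:
         [set x in flatten [seq inner (b q.1) (P q.1 q.2) | q <- Q]].
have cU : #|U| <= l + l * l * Pm.
  apply: leq_trans (leq_card_setU _ _) _; apply: leq_add.
    by apply: leq_trans (leq_imset_card _ _) _; apply: leq_trans (max_card _) _; rewrite card_ord.
  rewrite cardsE; apply: leq_trans (card_size _) _.
  apply: leq_trans (size_flat (k := Pm) _) _.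
    by move=> t /mapP[q qQ ->]; have [_ h _] := P1 q qQ.
  by rewrite size_map leq_mul2r (ltnW sQ) orbT.
have notU k : b k \notin [set x in flatten [seq inner (b q.1) (P q.1 q.2) | q <- Q]].
  rewrite inE; apply/flattenP => [[t /mapP[q qQ ->]]]; have [_ _ h] := P1 q qQ.
  by rewrite (negbTE (h k)).
have bU k : (k == i) || (k == j) -> b k \notin U.
  move=> kij; rewrite in_setU negb_or notU andbT; apply/imsetP => [[k' ]].
  rewrite inE => /andP[k'i k'j] /binj ek; move: kij; rewrite ek.
  by rewrite (negbTE k'i) (negbTE k'j).
have yW : b j \in S :\: U by rewrite in_setD bS andbT; apply: bU; rewrite eqxx orbT.
have xW : b i \in S :\: U by rewrite in_setD bS andbT; apply: bU; rewrite eqxx.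
have xy : b i != b j by apply: contra ij => /eqP /binj ->.
have hU' : (3 * d + 4 * #|S|) * #|U| + 3 * d * l <= d * d.
  apply: leq_trans hU; rewrite leq_add2r leq_mul2l cU orbT //.
have [p [p1 p2 p3 p4 p5]] := find_path mS ext yW xW xy (bin j) hU' hP.
have dp : dipath e (b i) (b j) p.
  split => //; by move: p2 xy; case: (p) => //= ->; rewrite eqxx.
have ip x : x \in inner (b i) p -> x \notin U.
  by move=> /inner_sub /p4; rewrite in_setD => /andP[].
pose P' := fun i' j' => if (i', j') == (i, j) then p else P i' j'.
have P'E q : q \in Q -> P' q.1 q.2 = P q.1 q.2.
  move=> qQ; rewrite /P' -surjective_pairing ifN //.
  by apply: contraNneq nqQ => <-.
have P'0 : P' i j = p by rewrite /P' eqxx.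
exists P'; split.
  move=> q; rewrite inE => /orP[/eqP ->|qQ] /=; last by rewrite P'E //; exact: P1.
  rewrite P'0; split => //.
    by rewrite size_inner; move: p5; case: (size p).
  move=> k; have [e1 e2] := dipath_end dp.
  case: (boolP ((k == i) || (k == j))) => [/orP[/eqP ->|/eqP ->] //|kij].
  apply/negP => /ip; rewrite in_setU negb_or => /andP[/negP h _]; apply: h.
  apply/imsetP; exists k => //; by rewrite inE -negb_or.
have inU q x : q \in Q -> x \in inner (b q.1) (P q.1 q.2) -> x \in U.
  move=> qQ xin; rewrite in_setU; apply/orP; right; rewrite inE.
  by apply/flattenP; exists (inner (b q.1) (P q.1 q.2)) => //; apply/mapP; exists q.
move=> q q'; rewrite !inE => /orP[/eqP ->|qQ] /orP[/eqP ->|q'Q] //= qq' x.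
- by rewrite eqxx in qq'.
- rewrite P'0 P'E // => xin; apply/negP => /(inU _ _ q'Q) xU.
  by move: (ip x xin); rewrite xU.
- rewrite P'0 P'E // => xin; apply/negP => /ip; by rewrite (inU _ _ qQ xin).
- rewrite !P'E //; exact: P2.
Qed.
End Build.

Lemma card_sum (S : {set V}) (P : pred V) : #|[set w in S | P w]| = \sum_(w in S) (P w : nat).
Proof.
rewrite -sum1_card (eq_bigl (fun w => (w \in S) && P w)); last by move=> w; rewrite inE.
rewrite big_mkcondr /=; apply: eq_bigr => w _; by case: (P w).
Qed.

Lemma dcount (S : {set V}) :
  \sum_(v in S) #|[set w in S | e v w]| = \sum_(v in S) #|[set w in S | e w v]|.
Proof.
rewrite (eq_bigr (fun v => \sum_(w in S) (e v w : nat))); last by move=> v _; rewrite card_sum.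
rewrite exchange_big /=; apply: eq_bigr => v _; by rewrite card_sum.
Qed.

Lemma branch (S : {set V}) (d l : nat) (x0 : V) : x0 \in S -> mdeg S d -> l <= d ->
  exists b : 'I_l -> V, [/\ injective b, forall i, b i \in S &
    forall i, d + 1 <= #|[set v in S | e v (b i)]| + l].
Proof.
move=> x0S mS ld.
set H := [set v in S | d + 1 <= #|[set w in S | e w v]| + l].
have m0 : 0 < #|S| by apply/card_gt0P; exists x0.
have cH : l <= #|H|.
  have A : #|S| * d <= \sum_(v in S) #|[set w in S | e w v]|.
    rewrite -dcount -sum_nat_const; apply: leq_sum => v vS; exact: mS.
  rewrite (big_setID H) /= in A.
  have B : \sum_(v in S :&: H) #|[set w in S | e w v]| <= #|S :&: H| * #|S|.
    rewrite -sum_nat_const; apply: leq_sum => v _; apply: subset_leq_card.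
    by apply/subsetP => w; rewrite inE => /andP[].
  have C : \sum_(v in S :\: H) #|[set w in S | e w v]| <= #|S :\: H| * (d - l).
    rewrite -sum_nat_const; apply: leq_sum => v; rewrite in_setD inE => /andP[vH vS].
    by move: vH; rewrite vS /= -ltnNge; lia.
  have D : #|S :&: H| <= #|H| := subset_leq_card (subsetIr _ _).
  have E : #|S :\: H| <= #|S| := subset_leq_card (subsetDl _ _).
  have F1 : #|S :&: H| * #|S| <= #|H| * #|S| by rewrite leq_mul2r D orbT.
  have F2 : #|S :\: H| * (d - l) <= #|S| * (d - l) by rewrite leq_mul2r E orbT.
  have G : #|S| * d <= #|H| * #|S| + #|S| * (d - l) by lia.
  have G2 : #|S| * l <= #|S| * #|H|.
    rewrite mulnBr in G; move: G; rewrite [#|H| * _]mulnC.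
    have : #|S| * l <= #|S| * d by rewrite leq_mul2l ld orbT.
    lia.
  by rewrite leq_pmul2l in G2.
exists (fun i => nth x0 (enum H) i).
have sz : size (enum H) = #|H| by rewrite cardE.
have inH (i : 'I_l) : nth x0 (enum H) i \in H.
  by rewrite -mem_enum mem_nth // sz (leq_trans (ltn_ord i) cH).
split.
- move=> i j /eqP; rewrite nth_uniq ?enum_uniq ?sz ?(leq_trans (ltn_ord _) cH) //.
  by move/eqP/val_inj.
- by move=> i; have := inH i; rewrite inE => /andP[].
- by move=> i; have := inH i; rewrite inE => /andP[].
Qed.
Lemma mdeg_le T k : T != set0 -> mdeg T k -> k <= #|V|.
Proof.
case/set0Pn=> v vT /(_ v vT) h; apply: leq_trans h _; exact: max_card.
Qed.

Lemma ratle (a b c d : nat) : 0 < b -> 0 < d ->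
  ((a%:R / b%:R : rat) <= c%:R / d%:R)%R -> a * d <= c * b.
Proof.
move=> b0 d0; rewrite ler_pdivrMr ?ltr0n // mulrAC ler_pdivlMr ?ltr0n //.
by rewrite -!natrM ler_nat.
Qed.

Lemma extremal S0 k0 : S0 != set0 -> mdeg S0 k0 ->
  exists S k, [/\ S != set0, mdeg S k, k0 ^ 4 * #|S| ^ 3 <= k ^ 4 * #|S0| ^ 3 &
    forall T j, T != set0 -> mdeg T j -> j ^ 4 * #|S| ^ 3 <= k ^ 4 * #|T| ^ 3].
Proof.
move=> S00 mS0.
pose P := [pred p : {set V} * 'I_#|V|.+1 | (p.1 != set0) && [forall v in p.1, (p.2 : nat) <= #|nbr p.1 v|]].
pose F := fun p : {set V} * 'I_#|V|.+1 => (((p.2 : nat) ^ 4)%:R / (#|p.1| ^ 3)%:R : rat).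
have Pin T j : T != set0 -> mdeg T j -> P (T, inord j).
  move=> T0 mT; rewrite /P /= T0 /= inordK ?ltnS ?(mdeg_le T0 mT) //.
  by apply/forall_inP.
have Pi0 := Pin _ _ S00 mS0.
case: (@arg_maxP _ _ _ (S0, inord k0) P F Pi0) => [[S k]] /andP[/= SS /forall_inP mS] Hm.
have cmp T j : T != set0 -> mdeg T j -> j ^ 4 * #|S| ^ 3 <= k ^ 4 * #|T| ^ 3.
  move=> T0 mT; have := Hm _ (Pin _ _ T0 mT); rewrite /F /= inordK ?ltnS ?(mdeg_le T0 mT) //.
  by move=> h; apply: ratle h; rewrite expn_gt0 card_gt0 ?T0 ?SS.
exists S; exists (nat_of_ord k); split => //.
exact: cmp.
Qed.
End G.

Lemma arith2 (l m d : nat) : 2 <= l -> d < m -> 64 * l ^ 2 * m ^ 3 <= d ^ 4 ->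
  [/\ l <= d, 0 < d, 2 * m * m < ((2 * m * m) %/ (d * d) + 1) * (d * d) &
   (3 * d + 4 * m) * (l + l * l * ((2 * m * m) %/ (d * d) + 1)) + 3 * d * l <= d * d].
Proof.
move=> l2 dm H.
have d4 : d ^ 4 < m ^ 4 by rewrite ltn_exp2r.
have m256 : 256 < m.
  have : 256 * m ^ 3 < m * m ^ 3.
    have : 256 * m ^ 3 <= 64 * l ^ 2 * m ^ 3.
      rewrite leq_mul2r; apply/orP; right.
      have : 2 ^ 2 <= l ^ 2 by rewrite (leq_exp2r 2 l (isT : 0 < 2)).
      lia.
    have -> : m * m ^ 3 = m ^ 4 by rewrite !expnS expn0; ring.
    lia.
  by rewrite ltn_mul2r => /andP[].
have d0 : 0 < d.
  case: d H {d4 dm} => // H; rewrite exp0n // in H.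
  have : 0 < l ^ 2 * m ^ 3.
    by rewrite muln_gt0 !expn_gt0; apply/andP; split; apply/orP; left; lia.
  lia.
have G1 : 128 * m * l <= d * d.
  rewrite -(leq_exp2r (128 * m * l) (d * d) (isT : 0 < 2)).
  have -> : (d * d) ^ 2 = d ^ 4 by rewrite !expnS expn0; ring.
  apply: leq_trans H.
  have -> : (128 * m * l) ^ 2 = 64 * l ^ 2 * m ^ 2 * 256 by rewrite !expnS expn0; ring.
  have -> : 64 * l ^ 2 * m ^ 3 = 64 * l ^ 2 * m ^ 2 * m by rewrite !expnS expn0; ring.
  by rewrite leq_mul2l ltnW // orbT.
have G3 : 64 * l * l * m <= d * d.
  have : (64 * l * l * m) * (m * m) <= (d * d) * (m * m).
    have -> : 64 * l * l * m * (m * m) = 64 * l ^ 2 * m ^ 3 by rewrite !expnS expn0; ring.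
    apply: leq_trans H _.
    have -> : d ^ 4 = (d * d) * (d * d) by rewrite !expnS expn0; ring.
    rewrite leq_mul2l; apply/orP; right; apply: leq_mul; exact: ltnW.
  by rewrite leq_pmul2r // muln_gt0; apply/andP; split; lia.
set q := (2 * m * m) %/ (d * d).
have dd0 : 0 < d * d by rewrite muln_gt0 d0.
have q1 : q * (d * d) <= 2 * m * m by apply: leq_trunc_div.
have q2 : 2 * m * m < (q + 1) * (d * d) by rewrite addn1; apply: ltn_ceil.
have G4 : 128 * m * (l * l * (q + 1)) <= 6 * (d * d).
  rewrite -(leq_pmul2r dd0).
  have -> : 128 * m * (l * l * (q + 1)) * (d * d) = 128 * m * (l * l) * (q * (d * d)) + 2 * (64 * l * l * m) * (d * d) by ring.
  have A : 128 * m * (l * l) * (q * (d * d)) <= 128 * m * (l * l) * (2 * m * m).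
    by rewrite leq_mul2l q1 orbT.
  have B : 128 * m * (l * l) * (2 * m * m) = 4 * (64 * l ^ 2 * m ^ 3) by rewrite !expnS expn0; ring.
  have C : 4 * (64 * l ^ 2 * m ^ 3) <= 4 * (d * d) * (d * d).
    have -> : 4 * (d * d) * (d * d) = 4 * d ^ 4 by rewrite !expnS expn0; ring.
    by rewrite leq_mul2l H orbT.
  have D : 2 * (64 * l * l * m) * (d * d) <= 2 * (d * d) * (d * d).
    by rewrite leq_mul2r leq_mul2l G3 !orbT.
  have -> : 6 * (d * d) * (d * d) = 4 * (d * d) * (d * d) + 2 * (d * d) * (d * d) by ring.
  rewrite B in A; apply: leq_add => //; exact: leq_trans A C.
have G5 : 128 * m * (l + l * l * (q + 1)) <= 7 * (d * d) by rewrite mulnDr; lia.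
split => //.
- have : 128 * m * l <= d * m by apply: leq_trans G1 _; rewrite leq_mul2l ltnW // orbT.
  have -> : 128 * m * l = m * (128 * l) by ring.
  rewrite [d * m]mulnC leq_pmul2l; last lia.
  lia.
- set U := l + l * l * (q + 1).
  have K1 : 128 * ((3 * d + 4 * m) * U) <= 7 * (128 * m * U).
    have : 3 * d + 4 * m <= 7 * m by lia.
    move=> h; have := leq_mul h (leqnn (128 * U)).
    have -> : 7 * (128 * m * U) = 7 * m * (128 * U) by ring.
    have -> : 128 * ((3 * d + 4 * m) * U) = (3 * d + 4 * m) * (128 * U) by ring.
    by [].
  have K2 : 128 * (3 * d * l) <= 3 * (d * d).
    have : d * l <= m * l by rewrite leq_mul2r ltnW // orbT.
    lia.
  have K3 : 128 * ((3 * d + 4 * m) * U + 3 * d * l) <= 128 * (d * d) by lia.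
  by rewrite leq_pmul2l in K3.
Qed.

Local Open Scope ring_scope.

Lemma real_bound (R : realType) (n d : nat) : (0 < n)%N ->
  (64 * (Num.truncn ((d%:R ^+ 2) / (8 * n%:R * Num.sqrt (n%:R : R)))) ^ 2 * n ^ 3 <= d ^ 4)%N.
Proof.
move=> n0.
set s := Num.sqrt (n%:R : R).
have s0 : 0 < s by rewrite sqrtr_gt0 ltr0n.
have ss : s ^+ 2 = n%:R by rewrite sqr_sqrtr // ler0n.
set x := (d%:R ^+ 2) / (8 * n%:R * s).
have den0 : 0 < 8 * n%:R * s by rewrite !mulr_gt0 // ltr0n.
have x0 : 0 <= x by apply: divr_ge0; [apply: exprn_ge0; apply: ler0n | exact: ltW].
set t := Num.truncn x.
have tx : t%:R <= x by rewrite /t truncn_le x0.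
have h1 : t%:R * (8 * n%:R * s) <= d%:R ^+ 2 :> R by rewrite -ler_pdivlMr.
have h2 : (t%:R * (8 * n%:R * s)) ^+ 2 <= (d%:R ^+ 2) ^+ 2 :> R.
  by rewrite ler_pXn2r // ?nnegrE // mulr_ge0 // ltW.
rewrite -(@ler_nat R) !natrM.
have E1 : (64 * (t%:R * t%:R) * (n%:R * (n%:R * n%:R)) : R) = (t%:R * (8 * n%:R * s)) ^+ 2.
  by rewrite -ss; ring.
have E2 : (d%:R * (d%:R * (d%:R * d%:R)) : R) = (d%:R ^+ 2) ^+ 2 by ring.
by rewrite E1 E2.
Qed.

Theorem theorem2 (R : realType) (V : finType) (e : rel V) (n d : nat) :
  (0 < n)%N -> (0 < d)%N -> loopless e -> #|V| = n ->
  (forall v : V, (d <= outdeg e v)%N) ->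
  contains_subdivision_complete e
    (Num.truncn ((d%:R ^+ 2) / (8 * n%:R * Num.sqrt (n%:R : R)))).
Proof.
move=> n0 d0 loopE cV outd.
have H64 := real_bound R d n0.
move: H64; set l := Num.truncn _; move: l => l H64.
have [x0 _] : exists x0 : V, true.
  by move: n0; rewrite -cV => /card_gt0P [x _]; exists x.
case: (leqP l 1) => hl.
  have eqI : forall i j : 'I_l, i = j.
    by move=> i j; apply: ord_inj; have := ltn_ord i; have := ltn_ord j; lia.
  exists (fun _ => x0), (fun _ _ => [::]); split.
  - by move=> i j _; exact: eqI.
  - by move=> i j; rewrite (eqI i j) eqxx.
  - by move=> i j k; rewrite (eqI i j) eqxx.
  - by move=> i j i' j'; rewrite (eqI i j) eqxx.
have loop : forall v, ~~ e v v := loopE.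
have mT : mdeg e [set: V] d.
  move=> v _; move: (outd v); rewrite /outdeg /nbr.
  by have -> : [set w in [set: V] | e v w] = [set w | e v w] by apply/setP => w; rewrite !inE.
have T0 : [set: V] != set0 by apply/set0Pn; exists x0.
have [S [dl [S0 mS H3 ext]]] := extremal T0 mT.
rewrite cardsT cV in H3.
have Hm : (64 * l ^ 2 * #|S| ^ 3 <= dl ^ 4)%N.
  have A : (64 * l ^ 2 * (d ^ 4 * #|S| ^ 3) <= 64 * l ^ 2 * (dl ^ 4 * n ^ 3))%N.
    by rewrite leq_mul2l H3 orbT.
  have B : (dl ^ 4 * (64 * l ^ 2 * n ^ 3) <= dl ^ 4 * d ^ 4)%N.
    by rewrite leq_mul2l H64 orbT.
  have E1 : (64 * l ^ 2 * (d ^ 4 * #|S| ^ 3) = d ^ 4 * (64 * l ^ 2 * #|S| ^ 3))%N by ring.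
  have E2 : (64 * l ^ 2 * (dl ^ 4 * n ^ 3) = dl ^ 4 * (64 * l ^ 2 * n ^ 3))%N by ring.
  have C : (d ^ 4 * (64 * l ^ 2 * #|S| ^ 3) <= d ^ 4 * dl ^ 4)%N.
    rewrite -E1 (mulnC (d ^ 4)%N (dl ^ 4)%N); apply: (leq_trans A); rewrite E2; exact: B.
  by rewrite leq_pmul2l ?expn_gt0 ?d0 in C.
have [v vS] := set0Pn _ S0.
have dm : (dl < #|S|)%N.
  have sub : nbr e S v \subset S :\ v.
    apply/subsetP => w; rewrite !inE => /andP[wS evw]; rewrite wS andbT.
    by apply: contraTneq evw => ->; exact: loop.
  have := subset_leq_card sub; have := mS v vS.
  have := cardsD1 v S; rewrite vS; lia.
have [ld d0' hP hU] := arith2 hl dm Hm.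
have [b [binj bS bin]] := branch vS mS ld.
set Q := enum [set p : 'I_l * 'I_l | p.1 != p.2].
have HQ : forall q, q \in Q -> q.1 != q.2 by move=> q; rewrite mem_enum inE.
have sQ : (size Q <= l * l)%N.
  rewrite /Q -cardE; apply: leq_trans (max_card _) _; by rewrite card_prod card_ord.
have [P [P1 P2]] := build loop mS ext binj bS bin hU hP (enum_uniq _) HQ sQ.
have inQ i j : i != j -> (i, j) \in Q by move=> ij; rewrite mem_enum inE.
exists b, P; split => //.
- by move=> i j ij; have [h _ _] := P1 _ (inQ _ _ ij).
- by move=> i j k ij; have [_ _ h] := P1 _ (inQ _ _ ij).
- move=> i j i' j' ij i'j' ne x xin; exact: (P2 _ _ (inQ _ _ ij) (inQ _ _ i'j') ne x xin).
Qed.
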